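(* Let $\mathbb{K}$ be an algebraically closed field of characteristic zero, $\mathcal{C}\subset\mathbb{K}^2$ an affine irreducible plane curve defined by an irreducible polynomial $f$, $A=(a,b)\in\mathbb{K}^2$, $d\in\mathbb{K}\setminus\{0\}$, and assume $\mathcal{C}_0\neq\emptyset$. Then: (1) if $\Omega$ is a non-empty open subset of $\mathcal{C}$, then $\pi_1(\pi_2^{-1}(\Omega))$ is a non-empty Zariski dense subset of $\mathfrak{C}(\mathcal{C},A,d)$; (2) if $\mathcal{C}$ is not the circle centered at $A$ of radius $d$, and $\Omega$ is a non-empty open subset of an irreducible component of $\mathfrak{C}(\mathcal{C},A,d)$, then $\pi_2(\pi_1^{-1}(\Omega))$ is a non-empty Zariski dense subset of $\mathcal{C}$.
   Context: $\mathfrak{B}(\mathcal{C},A,d)\subset\mathbb{K}^2\times\mathbb{K}^2\times\mathbb{K}$ is the algebraic set of $(\bar x,\bar y,w)$ with $f(y_1,y_2)=0$, $(x_1-y_1)^2+(x_2-y_2)^2=d^2$, $(y_2-b)(x_1-y_1)-(y_1-a)(x_2-y_2)=0$, $w((y_1-a)^2+(y_2-b)^2)=1$; $\pi_1,\pi_2$ are the projections $(\bar x,\bar y,w)\mapsto\bar x$ and $\mapsto\bar y$ restricted to $\mathfrak{B}(\mathcal{C},A,d)$. The conchoid $\mathfrak{C}(\mathcal{C},A,d)$ is the Zariski closure of $\pi_1(\mathfrak{B}(\mathcal{C},A,d))$. $\mathcal{C}_0=\{(p_1,p_2)\in\mathcal{C}:(p_1-a)^2+(p_2-b)^2\neq0\}$.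 The circle centered at $A$ of radius $d$ is $(y_1-a)^2+(y_2-b)^2=d^2$. *)

(* Defs.v *)
From HB Require Import structures.
From mathcomp Require Import all_boot all_order all_algebra.
Set Implicit Arguments. Unset Strict Implicit. Unset Printing Implicit Defensive.
Import GRing.Theory.
Local Open Scope ring_scope.

Section Conchoid.
Variable K : fieldType.

(* Bivariate polynomials K[y1,y2] are {poly {poly K}}: inner variable = first
   coordinate, outer variable = second coordinate. *)
Definition ev2 (p : {poly {poly K}}) (x : K * K) : K := (p.[x.2%:P]).[x.1].

Definition irreducible_elt (R : comUnitRingType) (p : R) : Prop :=
  p != 0 /\ p \isn't a GRing.unit /\
  forall g h : R, p = g * h -> g \is a GRing.unit \/ h \is a GRing.unit.

Definition subset2 (S T : K * K -> Prop) := forall x, S x -> T x.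

Definition zariski_closed (S : K * K -> Prop) : Prop :=
  exists F : {poly {poly K}} -> Prop,
    forall x, S x <-> (forall g, F g -> ev2 g x = 0).

Definition zclosure (S : K * K -> Prop) : K * K -> Prop :=
  fun x => forall Z, zariski_closed Z -> subset2 S Z -> Z x.

Definition zirreducible (Z : K * K -> Prop) : Prop :=
  zariski_closed Z /\ (exists x, Z x) /\
  forall Z1 Z2, zariski_closed Z1 -> zariski_closed Z2 ->
    (forall x, Z x <-> Z1 x \/ Z2 x) -> subset2 Z Z1 \/ subset2 Z Z2.

Definition irreducible_component (Y Z : K * K -> Prop) : Prop :=
  zirreducible Z /\ subset2 Z Y /\
  forall Z', zirreducible Z' -> subset2 Z Z' -> subset2 Z' Y -> subset2 Z' Z.

Definition open_in (X O : K * K -> Prop) : Prop :=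
  exists Z, zariski_closed Z /\ forall x, O x <-> X x /\ ~ Z x.

Definition curve (f : {poly {poly K}}) : K * K -> Prop := fun y => ev2 f y = 0.

Definition conchB (f : {poly {poly K}}) (a b d : K) (x y : K * K) (w : K) : Prop :=
  ev2 f y = 0 /\
  (x.1 - y.1) ^+ 2 + (x.2 - y.2) ^+ 2 = d ^+ 2 /\
  (y.2 - b) * (x.1 - y.1) - (y.1 - a) * (x.2 - y.2) = 0 /\
  w * ((y.1 - a) ^+ 2 + (y.2 - b) ^+ 2) = 1.

Definition pi1_pi2inv f a b d (O : K * K -> Prop) : K * K -> Prop :=
  fun x => exists y w, conchB f a b d x y w /\ O y.
Definition pi2_pi1inv f a b d (O : K * K -> Prop) : K * K -> Prop :=
  fun y => exists x w, conchB f a b d x y w /\ O x.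

Definition conchoid f a b d : K * K -> Prop :=
  zclosure (pi1_pi2inv f a b d (fun _ => True)).

Definition circle (a b d : K) : K * K -> Prop :=
  fun y => (y.1 - a) ^+ 2 + (y.2 - b) ^+ 2 = d ^+ 2.

Definition nonempty_dense_subset (S T : K * K -> Prop) : Prop :=
  (exists x, S x) /\ subset2 S T /\ subset2 T (zclosure S).

End Conchoid.

(* Main.v *)
Require Import Defs.
From HB Require Import structures.
From mathcomp Require Import all_boot all_order all_algebra.
From Stdlib Require Import Classical.
From mathcomp Require Import ring zify.
From Stdlib Require Import Lia.
Set Implicit Arguments. Unset Strict Implicit. Unset Printing Implicit Defensive.
Import GRing.Theory.
Local Open Scope ring_scope.

Section Aux.
Variable K : closedFieldType.
Implicit Types (p q g h : {poly {poly K}}) (x y : K * K).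

Definition colz (z : K) p : {poly K} := map_poly (horner_eval z) p.

Lemma ev2E p x : ev2 p x = (colz x.1 p).[x.2].
Proof.
rewrite /ev2 /colz -[x.2 in RHS](hornerC x.2 x.1) -horner_evalE horner_map.
by rewrite horner_evalE.
Qed.

Lemma ev2M p q x : ev2 (p * q) x = ev2 p x * ev2 q x.
Proof. by rewrite /ev2 !hornerM. Qed.
Lemma ev2D p q x : ev2 (p + q) x = ev2 p x + ev2 q x.
Proof. by rewrite /ev2 !hornerD. Qed.
Lemma ev2N p x : ev2 (- p) x = - ev2 p x.
Proof. by rewrite /ev2 !hornerN. Qed.
Lemma ev2B p q x : ev2 (p - q) x = ev2 p x - ev2 q x.
Proof. by rewrite ev2D ev2N. Qed.
Lemma ev2C (c : {poly K}) x : ev2 c%:P x = c.[x.1].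
Proof. by rewrite /ev2 hornerC. Qed.
Lemma ev2X x : ev2 'X x = x.2.
Proof. by rewrite /ev2 hornerX hornerC. Qed.
Lemma ev2CC (c : K) x : ev2 c%:P%:P x = c.
Proof. by rewrite ev2C hornerC. Qed.
Lemma ev2XC x : ev2 ('X : {poly K})%:P x = x.1.
Proof. by rewrite ev2C hornerX. Qed.
Lemma ev2_1 x : ev2 1 x = 1.
Proof. by rewrite -[1]/((1:{poly K})%:P) ev2C hornerC. Qed.
Lemma ev2_0 x : ev2 0 x = 0.
Proof. by rewrite /ev2 !horner0. Qed.
Lemma ev2X2 p n x : ev2 (p ^+ n) x = ev2 p x ^+ n.
Proof. by elim: n => [|n IH]; rewrite ?expr0 ?ev2_1 // !exprS ev2M IH. Qed.

Lemma colzM z p q : colz z (p * q) = colz z p * colz z q.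
Proof. by rewrite /colz rmorphM. Qed.

Lemma colzC z (c : {poly K}) : colz z c%:P = (c.[z])%:P.
Proof. by rewrite /colz map_polyC. Qed.

Lemma divX z p : colz z p = 0 ->
  p = (('X - z%:P)%:P) * map_poly (fun c => c %/ ('X - z%:P)) p.
Proof.
move=> H; apply/polyP => i.
rewrite coefCM coef_map_id0 ?div0p //.
have : (colz z p)`_i = 0 by rewrite H coef0.
rewrite /colz coef_map_id0 ?horner_evalE ?horner0 // => Hr.
rewrite mulrC Pdiv.Field.divpK //.
by rewrite dvdp_XsubCl /root Hr.
Qed.

Lemma unit_ev2 p x : p \is a GRing.unit -> ev2 p x != 0.
Proof.
move=> Hu; apply/eqP => H.
have := ev2M p p^-1 x; rewrite mulrV // ev2_1 H mul0r => /eqP.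
by rewrite oner_eq0.
Qed.

Lemma size1_unit p : size p = 1%N -> size (lead_coef p) = 1%N -> p \is a GRing.unit.
Proof.
move=> H1 H2.
rewrite poly_unitE H1 eqxx /=.
have -> : p`_0 = lead_coef p by rewrite lead_coefE H1.
rewrite poly_unitE H2 eqxx /= unitfE.
have : lead_coef (lead_coef p) != 0.
  by rewrite lead_coef_eq0 -size_poly_eq0 H2.
by rewrite lead_coefE H2.
Qed.

Lemma unit_size1 p : p \is a GRing.unit -> size p = 1%N.
Proof. by rewrite poly_unitE => /andP [/eqP]. Qed.

Lemma XzC_nunit (z : K) : ~~ ((('X - z%:P)%:P : {poly {poly K}}) \is a GRing.unit).
Proof.
rewrite poly_unitE size_polyC polyXsubC_eq0 /= coefC /=.
by rewrite poly_unitE size_XsubC.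
Qed.

Lemma XzC_neq0 (z : K) : (('X - z%:P)%:P : {poly {poly K}}) != 0.
Proof. by rewrite polyC_eq0 polyXsubC_eq0. Qed.

Lemma colzXz z : colz z (('X - z%:P)%:P) = 0.
Proof. by rewrite colzC hornerXsubC subrr. Qed.

Lemma colq_neq0 q z : irreducible_elt q -> (1 < size q)%N -> colz z q != 0.
Proof.
move=> [q0 [qnu qirr]] Hs; apply/negP => /eqP /divX Hq.
case: (qirr _ _ Hq) => Hu; first by move: (XzC_nunit z); rewrite Hu.
have := unit_size1 Hu; rewrite -(size_Cmul _ (negbT (polyXsubC_eq0 z))) -Hq => H.
by rewrite H in Hs.
Qed.

Lemma factor_root (c : {poly K}) : c != 0 -> size c != 1%N ->
  exists z c', c = c' * ('X - z%:P) /\ c' != 0 /\ (size c' < size c)%N.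
Proof.
move=> c0 /closed_rootP [z /factor_theorem [c' Hc]].
exists z, c'.
have c'0 : c' != 0 by apply: contraNneq c0 => H; rewrite Hc H mul0r.
split=> //; split=> //.
by rewrite Hc size_mul ?polyXsubC_eq0 // size_XsubC addn2 /=.
Qed.

Lemma C1 q : irreducible_elt q -> (1 < size q)%N ->
  forall (beta : {poly K}) G H, beta != 0 -> beta%:P * G = H * q ->
  exists H', G = H' * q.
Proof.
move=> qirr qs beta.
move: {2}(size beta) (leqnn (size beta)) => n.
elim: n beta => [|n IH] beta Hsz G H b0 E.
  by move: b0; rewrite -size_poly_eq0; case: (size beta) Hsz.
case: (boolP (size beta == 1%N)) => [/eqP s1|s1].
  have Hb : beta = (beta`_0)%:P by apply: size1_polyC; rewrite s1.
  have c0 : beta`_0 != 0 by apply: contraNneq b0 => H0; rewrite Hb H0.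
  exists ((beta`_0)^-1%:P%:P * H).
  rewrite -mulrA -E mulrA; move: c0; set c := beta`_0 => c0.
  rewrite Hb -!polyCM mulVf //.
  by rewrite polyC1 mul1r.
have [z [c' [Hc [c'0 Hlt]]]] := factor_root b0 s1.
have {}E : (('X - z%:P)%:P) * (c'%:P * G) = H * q.
  by rewrite -E Hc polyCM; ring.
have : colz z H * colz z q = 0.
  by rewrite -colzM -E colzM colzXz mul0r.
move/eqP; rewrite mulf_eq0 (negbTE (colq_neq0 z qirr qs)) orbF => /eqP /divX HH.
move: E; rewrite HH -mulrA => /(mulfI (XzC_neq0 z)) E'.
apply: (IH c') E' => //.
by rewrite -ltnS; apply: leq_trans Hlt Hsz.
Qed.

Lemma C3 q : irreducible_elt q ->
  forall (lam : {poly K}) Q h, lam != 0 -> (1 < size h)%N ->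
  lam%:P * q = Q * h -> size Q = 1%N.
Proof.
move=> [q0 [qnu qirr]] lam.
move: {2}(size lam) (leqnn (size lam)) => n.
elim: n lam => [|n IH] lam Hsz Q h l0 hs E.
  by move: l0; rewrite -size_poly_eq0; case: (size lam) Hsz.
case: (boolP (size lam == 1%N)) => [/eqP s1|s1].
  have Hb : lam = (lam`_0)%:P by apply: size1_polyC; rewrite s1.
  have c0 : lam`_0 != 0 by apply: contraNneq l0 => H0; rewrite Hb H0.
  move: c0 E; set c := lam`_0 => c0 E.
  have Eq : q = ((c^-1)%:P%:P * Q) * h.
    by rewrite -mulrA -E mulrA Hb -!polyCM mulVf // polyC1 mul1r.
  case: (qirr _ _ Eq) => Hu.
    have := unit_size1 Hu.
    by rewrite size_Cmul // polyC_eq0 invr_eq0.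
  by move: hs; rewrite (unit_size1 Hu).
have [z [c' [Hc [c'0 Hlt]]]] := factor_root l0 s1.
have Hlt' : (size c' <= n)%N by rewrite -ltnS; apply: leq_trans Hlt Hsz.
have {}E : (('X - z%:P)%:P) * (c'%:P * q) = Q * h.
  by rewrite -E Hc polyCM; ring.
have : colz z Q * colz z h = 0.
  by rewrite -colzM -E colzM colzXz mul0r.
move/eqP; rewrite mulf_eq0 => /orP [/eqP /divX HH | /eqP /divX HH].
  move: HH; set M := map_poly _ Q => HH.
  move: E; rewrite HH -mulrA => /(mulfI (XzC_neq0 z)) E'.
  rewrite size_Cmul ?polyXsubC_eq0 //.
  exact: (IH c' Hlt' _ h c'0 hs E').
move: HH; set M := map_poly _ h => HH.
move: E; rewrite HH [Q * _]mulrCA => /(mulfI (XzC_neq0 z)) E'.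
apply: (IH c' Hlt' _ _ c'0 _ E').
by move: hs; rewrite HH size_Cmul ?polyXsubC_eq0.
Qed.

Lemma roots_list (p : {poly K}) : p != 0 ->
  exists rs : seq K, forall t, p.[t] = 0 -> t \in rs.
Proof.
move=> p0; have [rs Hp] := closed_field_poly_normal p.
exists rs => t; rewrite Hp hornerZ horner_prod => /eqP.
rewrite mulf_eq0 lead_coef_eq0 (negbTE p0) /= prodf_seq_eq0 => /hasP [z zin].
by rewrite hornerXsubC subr_eq0 => /eqP ->.
Qed.

Lemma inf_K (s : seq K) : exists t : K, t \notin s.
Proof.
case: s => [|z0 s']; first by exists 0.
set s := z0 :: s'.
have Hs : size (\prod_(z <- s) ('X - z%:P) - 1) != 1%N.
  by rewrite size_polyDl ?size_prod_XsubC ?size_polyN ?size_poly1.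
have [t /rootP Hx] := closed_rootP _ Hs.
exists t; apply/negP => ts.
have H0 : \prod_(z <- s) ('X - z%:P).[t] == 0.
  by rewrite prodf_seq_eq0; apply/hasP; exists t; rewrite // hornerXsubC subrr eqxx.
move: Hx; rewrite hornerD hornerN hornerC horner_prod (eqP H0) sub0r.
by move/eqP; rewrite oppr_eq0 oner_eq0.
Qed.

Lemma avoid_roots (p : {poly K}) (s : seq K) : p != 0 ->
  exists t, p.[t] != 0 /\ t \notin s.
Proof.
move=> p0; have [rs Hrs] := roots_list p0.
have [t Ht] := inf_K (rs ++ s).
exists t; move: Ht; rewrite mem_cat negb_or => /andP [H1 H2]; split=> //.
by apply/eqP => /Hrs; rewrite (negbTE H1).
Qed.

Lemma sqrt_ex (c : K) : exists s : K, s ^+ 2 = c.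
Proof.
have Hs : size ('X^2 - c%:P : {poly K}) != 1%N by rewrite size_XnsubC.
have [t /rootP] := closed_rootP _ Hs.
by rewrite hornerD hornerN hornerC hornerXn => /eqP; rewrite subr_eq0 => /eqP; exists t.
Qed.


Definition inI q g h := exists u v, h = u * q + v * g.

Lemma stepA q g x0 : irreducible_elt q -> (1 < size q)%N ->
  ev2 q x0 = 0 -> ev2 g x0 != 0 ->
  exists r : {poly K}, r != 0 /\ inI q g r%:P.
Proof.
move=> qirr qs qx0 gx0.
suff : forall n h, (size h <= n)%N -> h != 0 -> inI q g h ->
  exists r : {poly K}, r != 0 /\ inI q g r%:P.
  move=> H; apply: (H (size q) q) => //; first by case: qirr.
  by exists 1, 0; rewrite mul1r mul0r addr0.
elim=> [|n IH] h Hsz h0 Ih.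
  by move: h0; rewrite -size_poly_eq0; case: (size h) Hsz.
case: (leqP (size h) 1) => Hs1.
  exists h`_0; rewrite -size1_polyC //; split=> //.
  by apply: contraNneq h0 => H; rewrite (size1_polyC Hs1) H.
have [u [v Huv]] := Ih.
set l1 := lead_coef h ^+ scalp q h.
set l2 := lead_coef h ^+ scalp g h.
have lh0 : lead_coef h != 0 by rewrite lead_coef_eq0.
have l10 : l1 != 0 by rewrite expf_neq0.
have l20 : l2 != 0 by rewrite expf_neq0.
have E1 := Pdiv.Idomain.divp_eq q h.
have E2 := Pdiv.Idomain.divp_eq g h.
rewrite -mul_polyC in E1. change (l1%:P * q = q %/ h * h + q %% h) in E1.
rewrite -mul_polyC in E2. change (l2%:P * g = g %/ h * h + g %% h) in E2.
have Hlt1 := ltn_modpN0 q h0.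
have Hlt2 := ltn_modpN0 g h0.
case: (eqVneq (q %% h) 0) => R1.
  case: (eqVneq (g %% h) 0) => R2.
    rewrite R1 addr0 in E1; rewrite R2 addr0 in E2.
    have Hs := C3 qirr l10 Hs1 E1.
    have Hq := size1_polyC (eq_leq Hs).
    set mu := (q %/ h)`_0 in Hq.
    have mu0 : mu != 0.
      by apply/eqP => H; move: Hs; rewrite Hq H size_poly0.
    have E3 : (mu * l2)%:P * g = ((g %/ h) * l1%:P) * q.
      by rewrite polyCM -mulrA E2 -mulrA E1 Hq; ring.
    have [H' HH'] := C1 qirr qs (mulf_neq0 mu0 l20) E3.
    by move: gx0; rewrite HH' ev2M qx0 mulr0 eqxx.
  apply: (IH (g %% h)) => //.
    by rewrite -ltnS; apply: leq_trans Hlt2 Hsz.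
  exists (- (g %/ h) * u), (l2%:P - (g %/ h) * v).
  have -> : g %% h = l2%:P * g - g %/ h * h by rewrite E2; ring.
  by rewrite Huv; ring.
apply: (IH (q %% h)) => //.
  by rewrite -ltnS; apply: leq_trans Hlt1 Hsz.
exists (l1%:P - (q %/ h) * u), (- (q %/ h) * v).
have -> : q %% h = l1%:P * q - q %/ h * h by rewrite E1; ring.
by rewrite Huv; ring.
Qed.


Lemma fin_union (A : seq K) (P : K -> K -> Prop) :
  (forall z, z \in A -> exists Lz : seq K, forall w, P z w -> w \in Lz) ->
  exists L : seq (K * K), forall z w, z \in A -> P z w -> (z, w) \in L.
Proof.
elim: A => [|a A IH] H; first by exists [::].
have [La HLa] := H a (mem_head _ _).
have [L HL] : exists L : seq (K * K), forall z w, z \in A -> P z w -> (z, w) \in L.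
  by apply: IH => z zA; apply: H; rewrite in_cons zA orbT.
exists ([seq (a, w) | w <- La] ++ L) => z w; rewrite in_cons mem_cat.
case/orP => [/eqP -> Pw | zA Pw]; last by rewrite HL ?orbT.
by rewrite (map_f (fun w => (a, w)) (HLa w Pw)).
Qed.

Lemma pairE x : x = (x.1, x.2). Proof. by case: x. Qed.

Lemma size_q_const q : irreducible_elt q -> (size q <= 1)%N ->
  exists z, forall x, ev2 q x = 0 <-> x.1 = z.
Proof.
move=> [q0 [qnu qirr]] Hs.
have Hq := size1_polyC Hs; set c := q`_0 in Hq.
have c0 : c != 0 by apply/eqP => H; move: q0; rewrite Hq H eqxx.
have cnu : ~~ (c \is a GRing.unit).
  by apply: contra qnu => Hu; rewrite Hq poly_unitE size_polyC c0 coefC.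
have cs : size c != 1%N.
  apply: contra cnu => /eqP H; rewrite poly_unitE H eqxx /= unitfE.
  have : lead_coef c != 0 by rewrite lead_coef_eq0.
  by rewrite lead_coefE H.
have [z [c' [Hc _]]] := factor_root c0 cs.
have Hq' : q = c'%:P * ('X - z%:P)%:P by rewrite Hq Hc polyCM.
exists z => x.
case: (qirr _ _ Hq') => Hu; last by move: (XzC_nunit z); rewrite Hu.
have Hc' := unit_ev2 x Hu.
rewrite Hq' ev2M ev2C in Hc' *.
rewrite ev2C hornerXsubC; split.
  by move/eqP; rewrite mulf_eq0 (negbTE Hc') /= subr_eq0 => /eqP.
by move=> ->; rewrite subrr mulr0.
Qed.

Lemma F1 q g x0 : irreducible_elt q -> ev2 q x0 = 0 -> ev2 g x0 != 0 ->
  exists L : seq (K * K), forall x, ev2 q x = 0 -> ev2 g x = 0 -> x \in L.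
Proof.
move=> qirr qx0 gx0.
case: (leqP (size q) 1) => Hs.
  have [z Hz] := size_q_const qirr Hs.
  have z0 : x0.1 = z by apply/Hz.
  have cg0 : colz z g != 0.
    by apply: contraNneq gx0 => H; rewrite ev2E z0 H horner0.
  have [rs Hrs] := roots_list cg0.
  exists [seq (z, w) | w <- rs] => x /Hz x1 gx.
  rewrite (pairE x) x1; apply: map_f; apply: Hrs.
  by rewrite -x1 -ev2E.
have [r [r0 [u [v Huv]]]] := stepA qirr Hs qx0 gx0.
have [rs Hrs] := roots_list r0.
have [L HL] := @fin_union rs (fun z w => (colz z q).[w] = 0) (fun z _ =>
   roots_list (colq_neq0 z qirr Hs)).
exists L => x qx gx.
rewrite (pairE x); apply: HL; last by rewrite -ev2E.
apply: Hrs; rewrite -ev2C Huv ev2D !ev2M qx gx; ring.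
Qed.


Lemma F2 q (L : seq (K * K)) : irreducible_elt q ->
  exists x, ev2 q x = 0 /\ x \notin L.
Proof.
move=> qirr.
case: (leqP (size q) 1) => Hs.
  have [z Hz] := size_q_const qirr Hs.
  have [t Ht] := inf_K (map snd L).
  exists (z, t); split; first by apply/Hz.
  by apply: contra Ht => H; apply: (map_f snd H).
have lq0 : lead_coef q != 0 by rewrite lead_coef_eq0; case: qirr.
have [t [Ht1 Ht2]] := avoid_roots (map fst L) lq0.
have Hsz : size (colz t q) = size q by rewrite /colz size_map_poly_id0 // horner_evalE.
have : size (colz t q) != 1%N by rewrite Hsz; case: (size q) Hs => [|[]].
case/closed_rootP => w /rootP Hw.
exists (t, w); split; first by rewrite ev2E.
by apply: contra Ht2 => H; apply: (map_f fst H).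
Qed.

Lemma NZ h (L : seq (K * K)) : h != 0 -> exists x, ev2 h x != 0 /\ x \notin L.
Proof.
move=> h0.
have lh0 : lead_coef h != 0 by rewrite lead_coef_eq0.
have [t [Ht1 Ht2]] := avoid_roots (map fst L) lh0.
have c0 : colz t h != 0.
  rewrite -size_poly_eq0 /colz size_map_poly_id0 ?horner_evalE // size_poly_eq0 //.
have [w [Hw1 Hw2]] := avoid_roots [::] c0.
exists (t, w); split; first by rewrite ev2E.
by apply: contra Ht2 => H; apply: (map_f fst H).
Qed.

Definition mu p := (size p + size (lead_coef p))%N.

Lemma mu_ge3 p : p != 0 -> ~~ (p \is a GRing.unit) -> (3 <= mu p)%N.
Proof.
move=> p0 pnu; rewrite /mu.
have s1 : (0 < size p)%N by rewrite size_poly_gt0.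
have s2 : (0 < size (lead_coef p))%N by rewrite size_poly_gt0 lead_coef_eq0.
case: (eqVneq (size p) 1%N) => H1; last by lia.
case: (eqVneq (size (lead_coef p)) 1%N) => H2; last by lia.
by move: pnu; rewrite size1_unit.
Qed.

Lemma mu_mul p q : p != 0 -> q != 0 -> (mu (p * q) + 2 = mu p + mu q)%N.
Proof.
move=> p0 q0; rewrite /mu lead_coefM size_mul // size_mul ?lead_coef_eq0 //.
have s1 : (0 < size p)%N by rewrite size_poly_gt0.
have s2 : (0 < size (lead_coef p))%N by rewrite size_poly_gt0 lead_coef_eq0.
have s3 : (0 < size q)%N by rewrite size_poly_gt0.
have s4 : (0 < size (lead_coef q))%N by rewrite size_poly_gt0 lead_coef_eq0.
move: s1 s2 s3 s4; move: (size p) (size q) (size (lead_coef p)) (size (lead_coef q)) => a b c d *. lia.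
Qed.

Lemma FACT h : h != 0 -> exists qs : seq {poly {poly K}},
  (forall r, r \in qs -> irreducible_elt r) /\
  forall x, ev2 h x = 0 -> exists r, r \in qs /\ ev2 r x = 0.
Proof.
move: {2}(mu h) (leqnn (mu h)) => n.
elim: n h => [|n IH] h Hn h0.
  by move: Hn; rewrite /mu; have := size_poly_gt0 h; rewrite h0; lia.
case: (boolP (h \is a GRing.unit)) => hu.
  by exists [::]; split=> // x hx; move: (unit_ev2 x hu); rewrite hx eqxx.
case: (classic (irreducible_elt h)) => hirr.
  exists [:: h]; split; first by move=> r; rewrite inE => /eqP ->.
  by move=> x hx; exists h; rewrite mem_head.
have [g [k [E [gu ku]]]] : exists g k, h = g * k /\ ~~ (g \is a GRing.unit) /\
    ~~ (k \is a GRing.unit).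
  apply: NNPP => Hn'; apply: hirr; split=> //; split=> // g k E.
  apply: NNPP => Hgk; apply: Hn'; exists g, k; split=> //.
  by split; apply/negP => Hu; apply: Hgk; [left|right].
have g0 : g != 0 by apply: contraNneq h0 => H; rewrite E H mul0r.
have k0 : k != 0 by apply: contraNneq h0 => H; rewrite E H mulr0.
have Hm := mu_mul g0 k0; rewrite -E in Hm.
have mg := mu_ge3 g0 gu; have mk := mu_ge3 k0 ku.
have [qs1 [Hq1 Hx1]] := IH g ltac:(lia) g0.
have [qs2 [Hq2 Hx2]] := IH k ltac:(lia) k0.
exists (qs1 ++ qs2); split.
  by move=> r; rewrite mem_cat => /orP [/Hq1|/Hq2].
move=> x; rewrite E ev2M => /eqP; rewrite mulf_eq0 => /orP [/eqP/Hx1|/eqP/Hx2] [r [Hr1 Hr2]];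
  by exists r; rewrite mem_cat Hr1 ?orbT.
Qed.


Definition V p : K * K -> Prop := fun x => ev2 p x = 0.

Lemma closed_ext (P Q : K * K -> Prop) : zariski_closed P ->
  (forall x, P x <-> Q x) -> zariski_closed Q.
Proof. by move=> [F HF] H; exists F => x; rewrite -H. Qed.

Lemma closed_V p : zariski_closed (V p).
Proof.
exists (fun g => g = p) => x; split; first by move=> H g ->.
by apply.
Qed.

Lemma closed_pt (p0 : K * K) : zariski_closed (fun x => x = p0).
Proof.
exists (fun g => g = ('X - p0.1%:P)%:P \/ g = 'X - p0.2%:P%:P) => x; split.
  move=> -> g [->|->]; first by rewrite ev2C hornerXsubC subrr.
  by rewrite ev2B ev2X ev2CC subrr.
move=> H.
have H1 := H _ (or_introl erefl); have H2 := H _ (or_intror erefl).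
rewrite ev2C hornerXsubC in H1; rewrite ev2B ev2X ev2CC in H2.
move/eqP: H1; move/eqP: H2; rewrite !subr_eq0 => /eqP E2 /eqP E1.
by rewrite (pairE x) (pairE p0) E1 E2.
Qed.

Lemma closed_empty : zariski_closed (fun _ : K * K => False).
Proof.
exists (fun g => g = 1) => x; split=> // H.
by move: (H 1 erefl); rewrite ev2_1 => /eqP; rewrite oner_eq0.
Qed.

Lemma closed_U (P Q : K * K -> Prop) : zariski_closed P -> zariski_closed Q ->
  zariski_closed (fun x => P x \/ Q x).
Proof.
move=> [F HF] [G HG].
exists (fun g => exists g1 g2, F g1 /\ G g2 /\ g = g1 * g2) => x; split.
  move=> [/HF H|/HG H] g [g1 [g2 [F1 [G2 ->]]]]; rewrite ev2M.
    by rewrite H ?mul0r.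
  by rewrite (H g2) ?mulr0.
move=> H; apply: NNPP => /not_or_and [/HF H1 /HG H2].
apply: H1 => g1 F1; apply: NNPP => Hg1.
apply: H2 => g2 G2; apply: NNPP => Hg2.
have := H (g1 * g2) (ex_intro _ g1 (ex_intro _ g2 (conj F1 (conj G2 erefl)))).
by rewrite ev2M => /eqP; rewrite mulf_eq0 => /orP [/eqP|/eqP].
Qed.

Lemma closed_I (P Q : K * K -> Prop) : zariski_closed P -> zariski_closed Q ->
  zariski_closed (fun x => P x /\ Q x).
Proof.
move=> [F HF] [G HG].
exists (fun g => F g \/ G g) => x; rewrite HF HG; split.
  by move=> [H1 H2] g [/H1|/H2].
by move=> H; split=> g Hg; apply: H; [left|right].
Qed.

Lemma closed_list (L : seq (K * K)) : zariski_closed (fun x => x \in L).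
Proof.
elim: L => [|p L IH]; first by apply: closed_ext closed_empty _.
apply: closed_ext (closed_U (closed_pt p) IH) _ => x.
rewrite in_cons; split; first by case=> [->|->]; rewrite ?eqxx ?orbT.
by case/orP => [/eqP->|]; [left|right].
Qed.

Lemma closure_sub (S Z : K * K -> Prop) x : zclosure S x -> zariski_closed Z ->
  (forall y, S y -> Z y) -> Z x.
Proof. by move=> H HZ HS; apply: H. Qed.

Lemma closed_notin (Z : K * K -> Prop) x : zariski_closed Z -> ~ Z x ->
  exists g, ev2 g x != 0 /\ forall y, Z y -> ev2 g y = 0.
Proof.
move=> [F HF] Hx; rewrite HF in Hx.
have [g Hg] : exists g, F g /\ ev2 g x != 0.
  apply: NNPP => H; apply: Hx => g Fg; apply: NNPP => H'; apply: H.
  by exists g; split=> //; apply/eqP.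
by exists g; case: Hg => Fg gx; split=> // y /HF; apply.
Qed.

Lemma ev2_neq0_poly g x : ev2 g x != 0 -> g != 0.
Proof. by apply: contraNneq => ->; rewrite ev2_0. Qed.

Lemma zirr_plane : zirreducible (fun _ : K * K => True).
Proof.
split; first by exists (fun _ => False).
split; first by exists (0, 0).
move=> Z1 Z2 HZ1 HZ2 HU.
apply: NNPP => /not_or_and [H1 H2].
have [x1 Hx1] : exists x, ~ Z1 x by apply: NNPP => H; apply: H1 => x _; apply: NNPP => Hn; apply: H; exists x.
have [x2 Hx2] : exists x, ~ Z2 x by apply: NNPP => H; apply: H2 => x _; apply: NNPP => Hn; apply: H; exists x.
have [g1 [g1x HZg1]] := closed_notin HZ1 Hx1.
have [g2 [g2x HZg2]] := closed_notin HZ2 Hx2.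
have g0 : g1 * g2 != 0 by rewrite mulf_neq0 // (ev2_neq0_poly g1x, ev2_neq0_poly g2x).
have [x [Hx _]] := NZ [::] g0.
case: ((HU x).1 I) => [/HZg1|/HZg2] H; by move: Hx; rewrite ev2M H ?mul0r ?mulr0 eqxx.
Qed.

Lemma zirr_V q : irreducible_elt q -> zirreducible (V q).
Proof.
move=> qirr; split; first exact: closed_V.
split; first by have [x [Hx _]] := F2 [::] qirr; exists x.
move=> Z1 Z2 HZ1 HZ2 HU.
apply: NNPP => /not_or_and [H1 H2].
have [x1 [Vx1 Hx1]] : exists x, V q x /\ ~ Z1 x.
  apply: NNPP => H; apply: H1 => x Vx; apply: NNPP => Hn; apply: H; by exists x.
have [x2 [Vx2 Hx2]] : exists x, V q x /\ ~ Z2 x.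
  apply: NNPP => H; apply: H2 => x Vx; apply: NNPP => Hn; apply: H; by exists x.
have [g1 [g1x HZg1]] := closed_notin HZ1 Hx1.
have [g2 [g2x HZg2]] := closed_notin HZ2 Hx2.
have [L1 HL1] := F1 qirr Vx1 g1x.
have [L2 HL2] := F1 qirr Vx2 g2x.
have [x [Vx Hx]] := F2 (L1 ++ L2) qirr.
move: Hx; rewrite mem_cat.
by case: ((HU x).1 Vx) => [/HZg1|/HZg2] H; [rewrite (HL1 x Vx H) | rewrite (HL2 x Vx H) orbT].
Qed.

Lemma zirr_split (G Z1 Z2 : K * K -> Prop) : zirreducible G ->
  zariski_closed Z1 -> zariski_closed Z2 -> (forall x, G x -> Z1 x \/ Z2 x) ->
  subset2 G Z1 \/ subset2 G Z2.
Proof.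
move=> [HG [_ Hirr]] H1 H2 HU.
have [] := Hirr (fun x => G x /\ Z1 x) (fun x => G x /\ Z2 x)
  (closed_I HG H1) (closed_I HG H2).
- move=> x; split; first by move=> Gx; case: (HU x Gx); [left|right].
  by case=> [[]|[]].
- by move=> H; left => x /H [].
- by move=> H; right => x /H [].
Qed.

Lemma closed_Vseq (qs : seq {poly {poly K}}) :
  zariski_closed (fun x => exists r, r \in qs /\ ev2 r x = 0).
Proof.
elim: qs => [|r qs IH]; first by apply: closed_ext closed_empty _ => x; split=> // [[r []]].
apply: closed_ext (closed_U (closed_V r) IH) _ => x; split.
  by case=> [H|[r' [H1 H2]]]; [exists r; rewrite mem_head | exists r'; rewrite in_cons H1 orbT].
case=> r' []; rewrite in_cons => /orP [/eqP -> H|H1 H2]; first by left.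
by right; exists r'.
Qed.

Lemma zirr_in_seq (G : K * K -> Prop) (qs : seq {poly {poly K}}) : zirreducible G ->
  (forall x, G x -> exists r, r \in qs /\ ev2 r x = 0) ->
  exists r, r \in qs /\ forall x, G x -> ev2 r x = 0.
Proof.
move=> HG; elim: qs => [|r qs IH] H.
  by case: HG => _ [[x Gx] _]; case: (H x Gx) => r [].
have [] := zirr_split HG (closed_V r) (closed_Vseq qs) _.
- move=> x Gx; case: (H x Gx) => r' []; rewrite in_cons => /orP [/eqP-> ?|? ?].
    by left.
  by right; exists r'.
- by move=> Hr; exists r; rewrite mem_head.
- move=> Hs; have [r' [H1 H2]] := IH Hs.
  by exists r'; rewrite in_cons H1 orbT.
Qed.

Lemma IRRCL (G : K * K -> Prop) : zirreducible G ->
  (forall x, G x) \/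
  (exists q, irreducible_elt q /\ forall x, G x <-> ev2 q x = 0) \/
  (exists pt : K * K, forall x, G x <-> x = pt).
Proof.
move=> HG.
case: (classic (forall x, G x)) => Hall; first by left.
right.
have [x0 Hx0] : exists x, ~ G x by apply: NNPP => H; apply: Hall => x; apply: NNPP => Hn; apply: H; exists x.
have [g [gx HGg]] := closed_notin HG.1 Hx0.
have [qs [Hqs Hx]] := FACT (ev2_neq0_poly gx).
have [r [rin Hr]] := zirr_in_seq HG (fun x Gx => Hx x (HGg x Gx)).
have rirr := Hqs r rin.
case: (classic (exists L : seq (K * K), forall x, G x -> x \in L)) => [[L HL]|Hinf].
  right; case: HG => [HGc [[pt Gp] Hirr]].
  exists pt.
  have [] := zirr_split (conj HGc (conj (ex_intro _ pt Gp) Hirr)) (closed_pt pt)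
     (closed_list [seq y <- L | y != pt]) _.
  - move=> x Gx; case: (eqVneq x pt) => [->|xp]; first by left.
    by right; rewrite mem_filter xp HL.
  - by move=> H x; split=> [/H|->].
  - by move=> H; move: (H pt Gp); rewrite mem_filter eqxx.
left; exists r; split=> // x; split; first exact: Hr.
move=> Vx; case: HG => [[F HF] _]; apply/HF => g' Fg.
apply: NNPP => Hg.
have [L HL] := F1 rirr Vx (introN eqP Hg).
apply: Hinf; exists L => y Gy; apply: HL; first exact: Hr.
by move/HF: Gy; apply.
Qed.


Lemma PCL (X : Type) (Pr : (X -> K) -> Prop) :
  (forall u v, Pr u -> (forall t, u t = v t) -> Pr v) ->
  (forall c : K, Pr (fun _ => c)) ->
  (forall u v, Pr u -> Pr v -> Pr (fun t => u t + v t)) ->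
  (forall u v, Pr u -> Pr v -> Pr (fun t => u t * v t)) ->
  forall g u1 u2, Pr u1 -> Pr u2 -> Pr (fun t => ev2 g (u1 t, u2 t)).
Proof.
move=> Hext Hc Hadd Hmul g u1 u2 H1 H2.
have Hin : forall c : {poly K}, Pr (fun t => c.[u1 t]).
  elim/poly_ind => [|c k IH]; first by apply: Hext (Hc 0) _ => t; rewrite horner0.
  apply: Hext (Hadd _ _ (Hmul _ _ IH H1) (Hc k)) _ => t.
  by rewrite hornerD hornerMX hornerC.
elim/poly_ind: g => [|g c IH]; first by apply: Hext (Hc 0) _ => t; rewrite ev2_0.
apply: Hext (Hadd _ _ (Hmul _ _ IH H2) (Hin c)) _ => t.
by rewrite ev2D ev2M ev2X ev2C.
Qed.

End Aux.

Section Conch.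
Variable K : closedFieldType.
Hypothesis charK0 : [pchar K] =i pred0.
Variable f : {poly {poly K}}.
Hypothesis f_irr : irreducible_elt f.
Variables a b d : K.
Hypothesis d_neq0 : d != 0.
Hypothesis C0_ne : exists p : K * K, curve f p /\ (p.1 - a) ^+ 2 + (p.2 - b) ^+ 2 != 0.

Definition nn (y : K * K) := (y.1 - a) ^+ 2 + (y.2 - b) ^+ 2.
Definition nP : {poly {poly K}} := (('X - a%:P) ^+ 2)%:P + ('X - b%:P%:P) ^+ 2.
Lemma ev2_nP y : ev2 nP y = nn y.
Proof.
by rewrite /nP ev2D ev2C ev2X2 ev2B ev2X ev2CC horner_exp hornerXsubC.
Qed.

Definition xs (y : K * K) (s : K) := (y.1 + d / s * (y.1 - a), y.2 + d / s * (y.2 - b)).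

Lemma two0 : (2 : K) != 0.
Proof. by have := (pcharf0P K).1 charK0 2; rewrite /= => ->. Qed.

Lemma subr0_eq' (u v : K) : u - v = 0 -> u = v.
Proof. by move/eqP; rewrite subr_eq0 => /eqP. Qed.

Lemma CB x y : (exists w, conchB f a b d x y w) <->
  curve f y /\ nn y != 0 /\ exists s, s ^+ 2 = nn y /\ x = xs y s.
Proof.
split.
  move=> [w [Hf [Hd [Hc Hw]]]].
  have nn0 : nn y != 0.
    by apply/eqP => H; move: Hw; rewrite -/(nn y) H mulr0 => /eqP; rewrite eq_sym oner_eq0.
  split=> //; split=> //.
  set Y1 := y.1 - a in Hc Hw nn0 *; set Y2 := y.2 - b in Hc Hw nn0 *.
  set v1 := x.1 - y.1 in Hd Hc; set v2 := x.2 - y.2 in Hd Hc.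
  set t := (v1 * Y1 + v2 * Y2) / nn y.
  have Hv1 : v1 = t * Y1.
    apply: (mulIf nn0); rewrite /t mulrAC divfK //.
    apply: subr0_eq'.
    have -> : v1 * nn y - (v1 * Y1 + v2 * Y2) * Y1 = Y2 * (Y2 * v1 - Y1 * v2).
      by rewrite /nn -/Y1 -/Y2; ring.
    by rewrite Hc mulr0.
  have Hv2 : v2 = t * Y2.
    apply: (mulIf nn0); rewrite /t mulrAC divfK //.
    apply: subr0_eq'.
    have -> : v2 * nn y - (v1 * Y1 + v2 * Y2) * Y2 = - Y1 * (Y2 * v1 - Y1 * v2).
      by rewrite /nn -/Y1 -/Y2; ring.
    by rewrite Hc mulr0.
  have Hd2 : d ^+ 2 = t ^+ 2 * nn y.
    by rewrite -Hd Hv1 Hv2 /nn -/Y1 -/Y2; ring.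
  have t0 : t != 0.
    by apply/eqP => H; move: Hd2; rewrite H expr0n mul0r => /eqP; rewrite expf_eq0 (negbTE d_neq0) andbF.
  exists (d / t); split.
    by rewrite expr_div_n Hd2 mulrC mulKf // expf_neq0.
  have dt : d / (d / t) = t by rewrite invf_div mulrC divfK.
  rewrite /xs dt -/Y1 -/Y2 -Hv1 -Hv2 /v1 /v2.
  by rewrite {1}(pairE x); congr (_, _); ring.
move=> [Hf [nn0 [s [Hs ->]]]].
have s0 : s != 0 by apply/eqP => H; move: nn0; rewrite -Hs H expr0n eqxx.
exists (nn y)^-1; split=> //=; split; last split.
- transitivity ((d / s) ^+ 2 * nn y); first by rewrite /nn /=; ring.
  by rewrite -Hs; field.
- ring.
- by rewrite mulVf.
Qed.


Definition Rf (phi : K * K -> K) := exists (Phi : {poly {poly K}}) (k : nat),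
  forall y, nn y != 0 -> nn y ^+ k * phi y = ev2 Phi y.

Lemma R_ext u v : Rf u -> (forall t, u t = v t) -> Rf v.
Proof. by move=> [P [k H]] E; exists P, k => y /H; rewrite E. Qed.
Lemma R_const c : Rf (fun _ => c).
Proof. by exists c%:P%:P, 0%N => y _; rewrite ev2CC expr0 mul1r. Qed.
Lemma R_add u v : Rf u -> Rf v -> Rf (fun t => u t + v t).
Proof.
move=> [P1 [k1 H1]] [P2 [k2 H2]].
exists (nP ^+ k2 * P1 + nP ^+ k1 * P2), (k1 + k2)%N => y y0.
rewrite ev2D !ev2M !ev2X2 ev2_nP -H1 // -H2 // exprD; ring.
Qed.
Lemma R_mul u v : Rf u -> Rf v -> Rf (fun t => u t * v t).
Proof.
move=> [P1 [k1 H1]] [P2 [k2 H2]].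
exists (P1 * P2), (k1 + k2)%N => y y0.
rewrite ev2M -H1 // -H2 // exprD; ring.
Qed.
Lemma R_fst : Rf (fun y => y.1).
Proof. by exists ('X%:P), 0%N => y _; rewrite ev2XC expr0 mul1r. Qed.
Lemma R_snd : Rf (fun y => y.2).
Proof. by exists 'X, 0%N => y _; rewrite ev2X expr0 mul1r. Qed.
Lemma R_nn : Rf nn.
Proof. by exists nP, 0%N => y _; rewrite ev2_nP expr0 mul1r. Qed.
Lemma R_w : Rf (fun y => (nn y)^-1).
Proof. by exists 1, 1%N => y y0; rewrite ev2_1 expr1 mulfV. Qed.

Definition R2f (psi : (K * K) * K -> K) := exists phi0 phi1, Rf phi0 /\ Rf phi1 /\
  forall y s, nn y != 0 -> s ^+ 2 = nn y -> psi (y, s) = phi0 y + s * phi1 y.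

Lemma R2_ext u v : R2f u -> (forall t, u t = v t) -> R2f v.
Proof. by move=> [p0 [p1 [H0 [H1 H]]]] E; exists p0, p1; do 2 split=> //; move=> y s y0 s0; rewrite -E H. Qed.
Lemma R2_const c : R2f (fun _ => c).
Proof. by exists (fun _ => c), (fun _ => 0); split; [apply: R_const|split; [apply: R_const|move=> *; rewrite mulr0 addr0]]. Qed.
Lemma R2_add u v : R2f u -> R2f v -> R2f (fun t => u t + v t).
Proof.
move=> [p0 [p1 [H0 [H1 H]]]] [q0 [q1 [G0 [G1 G]]]].
exists (fun y => p0 y + q0 y), (fun y => p1 y + q1 y); split; first exact: R_add.
split; first exact: R_add.
by move=> y s y0 s0; rewrite H // G //; ring.
Qed.
Lemma R2_mul u v : R2f u -> R2f v -> R2f (fun t => u t * v t).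
Proof.
move=> [p0 [p1 [H0 [H1 H]]]] [q0 [q1 [G0 [G1 G]]]].
exists (fun y => p0 y * q0 y + nn y * (p1 y * q1 y)), (fun y => p0 y * q1 y + p1 y * q0 y).
split; first by apply: R_add; [apply: R_mul | apply: R_mul; [apply: R_nn|apply: R_mul]].
split; first by apply: R_add; apply: R_mul.
move=> y s y0 s0; rewrite H // G // -s0; ring.
Qed.
Lemma R2_x1 : R2f (fun t => (xs t.1 t.2).1).
Proof.
exists (fun y => y.1), (fun y => d * (y.1 - a) * (nn y)^-1); split; first exact: R_fst.
split.
  apply: R_mul; last exact: R_w.
  apply: R_mul; first exact: R_const.
  by apply: (R_add R_fst (R_const (- a))).
move=> y s y0 s0 /=.
have sn0 : s != 0 by apply/eqP => H; move: y0; rewrite -s0 H expr0n eqxx.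
rewrite -s0; field; exact: sn0.
Qed.
Lemma R2_x2 : R2f (fun t => (xs t.1 t.2).2).
Proof.
exists (fun y => y.2), (fun y => d * (y.2 - b) * (nn y)^-1); split; first exact: R_snd.
split.
  apply: R_mul; last exact: R_w.
  apply: R_mul; first exact: R_const.
  by apply: (R_add R_snd (R_const (- b))).
move=> y s y0 s0 /=.
have sn0 : s != 0 by apply/eqP => H; move: y0; rewrite -s0 H expr0n eqxx.
rewrite -s0; field; exact: sn0.
Qed.

Lemma R2_ev g : R2f (fun t => ev2 g (xs t.1 t.2)).
Proof.
have := @PCL K _ R2f R2_ext R2_const R2_add R2_mul g _ _ R2_x1 R2_x2.
by move=> H; apply: (R2_ext H) => t; rewrite -pairE.
Qed.


Lemma curve_nP_fin : exists L : seq (K * K), forall y, curve f y -> nn y = 0 -> y \in L.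
Proof.
have [p [Hp np]] := C0_ne.
have np' : ev2 nP p != 0 by rewrite ev2_nP.
have [L HL] := F1 f_irr Hp np'.
by exists L => y Hy Hn; apply: HL => //; rewrite ev2_nP.
Qed.

Lemma EXT phi (E : seq (K * K)) : Rf phi ->
  (forall y, curve f y -> nn y != 0 -> y \notin E -> phi y = 0) ->
  forall y, curve f y -> nn y != 0 -> phi y = 0.
Proof.
move=> [P [k HP]] H y0 Hy0 n0; apply: NNPP => Hphi.
have P0 : ev2 P y0 != 0.
  by rewrite -HP // mulf_neq0 ?expf_neq0 //; apply/eqP.
have [L1 HL1] := F1 f_irr Hy0 P0.
have [L2 HL2] := curve_nP_fin.
have [y [Hy Hn]] := F2 (L1 ++ L2 ++ E) f_irr.
move: Hn; rewrite !mem_cat !negb_or => /and3P [n1 n2 n3].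
have ny : nn y != 0 by apply: contraNneq n2 => H0; apply: HL2.
have := H y Hy ny n3 => Hz.
move: n1; rewrite HL1 //.
by rewrite -HP // Hz mulr0.
Qed.

Lemma sq_neq0 y s : nn y != 0 -> s ^+ 2 = nn y -> s != 0.
Proof. by move=> y0 s0; apply/eqP => H; move: y0; rewrite -s0 H expr0n eqxx. Qed.

Lemma KEY psi (E : seq (K * K)) : R2f psi ->
  (forall y s, curve f y -> nn y != 0 -> s ^+ 2 = nn y -> y \notin E -> psi (y, s) = 0) ->
  forall y s, curve f y -> nn y != 0 -> s ^+ 2 = nn y -> psi (y, s) = 0.
Proof.
move=> [p0 [p1 [R0 [R1 Hps]]]] H.
have Hboth : forall y, curve f y -> nn y != 0 -> y \notin E -> p0 y = 0 /\ p1 y = 0.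
  move=> y Hy y0 yE.
  have [s Hs] := sqrt_ex (nn y).
  have sn0 := sq_neq0 y0 Hs.
  have E1 := H y s Hy y0 Hs yE.
  have E2 := H y (- s) Hy y0 (etrans (sqrrN s) Hs) yE.
  rewrite Hps // in E1.
  rewrite Hps ?sqrrN // in E2.
  have H0 : 2 * p0 y = 0 by rewrite -[RHS](addr0 0) -{1}E1 -E2; ring.
  move/eqP: H0; rewrite mulf_eq0 (negbTE two0) /= => /eqP H0.
  split=> //; move: E1; rewrite H0 add0r => /eqP; rewrite mulf_eq0 (negbTE sn0) /=.
  by move/eqP.
have Z0 := EXT R0 (fun y Hy y0 yE => (Hboth y Hy y0 yE).1).
have Z1 := EXT R1 (fun y Hy y0 yE => (Hboth y Hy y0 yE).2).
by move=> y s Hy y0 Hs; rewrite Hps // Z0 // Z1 // mulr0 addr0.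
Qed.


Lemma in_pi1 (O : K * K -> Prop) y s : curve f y -> nn y != 0 -> s ^+ 2 = nn y -> O y ->
  pi1_pi2inv f a b d O (xs y s).
Proof.
move=> Hy y0 Hs Oy.
have [w Hw] : exists w, conchB f a b d (xs y s) y w.
  by apply/CB; split=> //; split=> //; exists s.
by exists y, w.
Qed.

Lemma part1 (O : K * K -> Prop) : open_in (curve f) O -> (exists p, O p) ->
     nonempty_dense_subset (pi1_pi2inv f a b d O) (conchoid f a b d).
Proof.
move=> [Z [HZ HO]] [p Op].
have [Cp nZp] := (HO p).1 Op.
have [g0 [g0p HZg0]] := closed_notin HZ nZp.
have [L1 HL1] := F1 f_irr Cp g0p.
have [L2 HL2] := curve_nP_fin.
have HOy : forall y, curve f y -> y \notin L1 -> O y.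
  move=> y Hy yL; apply/HO; split=> // Zy.
  by move: yL; rewrite (HL1 y Hy (HZg0 y Zy)).
split.
  have [y [Hy Hn]] := F2 (L1 ++ L2) f_irr.
  move: Hn; rewrite mem_cat negb_or => /andP [n1 n2].
  have ny : nn y != 0 by apply: contraNneq n2 => H0; apply: HL2.
  have [s Hs] := sqrt_ex (nn y).
  exists (xs y s); apply: in_pi1 => //; exact: HOy.
split.
  move=> x [y [w [Hc _]]] Z' HZ' HT; apply: HT.
  by exists y, w; split.
move=> x Wx Z' HZ' HS; apply: Wx => // x' [y [w [Hc _]]].
have [Hy [y0 [s [Hs ->]]]] := (CB x' y).1 (ex_intro _ w Hc).
case: HZ' => [F' HF']; apply/HF' => g Fg.
apply: (KEY (psi := fun t => ev2 g (xs t.1 t.2)) (R2_ev g) _ Hy y0 Hs).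
move=> y1 s1 Hy1 y10 Hs1 y1L.
have := HS _ (in_pi1 Hy1 y10 Hs1 (HOy y1 Hy1 y1L)).
by move/HF'; apply.
Qed.


Definition R1f (phi : K -> K) := exists (Phi : {poly K}) (k : nat),
  forall t, t != 0 -> t ^+ k * phi t = Phi.[t].

Lemma R1_ext u v : R1f u -> (forall t, u t = v t) -> R1f v.
Proof. by move=> [P [k H]] E; exists P, k => y /H; rewrite E. Qed.
Lemma R1_const c : R1f (fun _ => c).
Proof. by exists c%:P, 0%N => y _; rewrite hornerC expr0 mul1r. Qed.
Lemma R1_add u v : R1f u -> R1f v -> R1f (fun t => u t + v t).
Proof.
move=> [P1 [k1 H1]] [P2 [k2 H2]].
exists ('X ^+ k2 * P1 + 'X ^+ k1 * P2), (k1 + k2)%N => y y0.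
rewrite hornerD !hornerM !hornerXn -H1 // -H2 // exprD; ring.
Qed.
Lemma R1_mul u v : R1f u -> R1f v -> R1f (fun t => u t * v t).
Proof.
move=> [P1 [k1 H1]] [P2 [k2 H2]].
exists (P1 * P2), (k1 + k2)%N => y y0.
rewrite hornerM -H1 // -H2 // exprD; ring.
Qed.
Lemma R1_id : R1f (fun t => t).
Proof. by exists 'X, 0%N => y _; rewrite hornerX expr0 mul1r. Qed.
Lemma R1_inv : R1f (fun t => t^-1).
Proof. by exists 1, 1%N => y y0; rewrite hornerC expr1 mulfV. Qed.

Definition cP : {poly {poly K}} := nP - (d ^+ 2)%:P%:P.
Lemma ev2_cP y : ev2 cP y = nn y - d ^+ 2.
Proof. by rewrite /cP ev2B ev2_nP ev2CC. Qed.

Lemma circleE y : circle a b d y <-> nn y = d ^+ 2.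
Proof. by []. Qed.

Lemma CIRC : (exists p, ~ (curve f p <-> circle a b d p)) ->
  exists E : seq (K * K), forall y, curve f y -> nn y = d ^+ 2 -> y \in E.
Proof.
move=> [p0 Hp0].
have [[c0 nc0]|[nc0 c0]] : (curve f p0 /\ ~ circle a b d p0) \/ (~ curve f p0 /\ circle a b d p0).
  apply: NNPP => H; apply: Hp0; split=> H'; apply: NNPP => H''; apply: H.
    by left.
  by right.
  have cp0 : ev2 cP p0 != 0 by rewrite ev2_cP subr_eq0; apply/eqP.
  have [L HL] := F1 f_irr c0 cp0.
  by exists L => y Hy Hn; apply: HL => //; rewrite ev2_cP Hn subrr.
have [i Hi] := sqrt_ex (-1 : K).
have i0 : i != 0 by apply/eqP => H; move: Hi; rewrite H expr0n => /eqP; rewrite eq_sym oppr_eq0 oner_eq0.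
set D := d ^+ 2.
have D0 : D != 0 by rewrite expf_neq0.
pose pt (t : K) := (a + (t + D / t) / 2, b + (t - D / t) / (2 * i)).
pose tf (y : K * K) := (y.1 - a) + i * (y.2 - b).
have Htf : forall y, nn y = D -> tf y != 0 /\ pt (tf y) = y.
  move=> y Hy.
  have Hm : tf y * ((y.1 - a) - i * (y.2 - b)) = D.
    rewrite -Hy /tf /nn; apply: subr0_eq'.
    have -> : ((y.1 - a) + i * (y.2 - b)) * ((y.1 - a) - i * (y.2 - b)) -
      ((y.1 - a) ^+ 2 + (y.2 - b) ^+ 2) = - (i ^+ 2 + 1) * (y.2 - b) ^+ 2 by ring.
    by rewrite Hi addNr oppr0 mul0r.
  have t0 : tf y != 0 by apply: contraNneq D0 => H; rewrite -Hm H mul0r.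
  split=> //.
  have HD : D / tf y = (y.1 - a) - i * (y.2 - b) by rewrite -Hm mulrC mulKf.
  rewrite /pt HD (pairE y) /tf /=; congr (_, _).
    by field; exact: two0.
  by field; rewrite i0 two0.
have Rpt1 : R1f (fun t => (pt t).1).
  apply: R1_add; first exact: R1_const.
  apply: R1_mul; last exact: R1_const.
  apply: R1_add; first exact: R1_id.
  by apply: R1_mul; [exact: R1_const | exact: R1_inv].
have Rpt2 : R1f (fun t => (pt t).2).
  apply: (@R1_ext (fun t => b + (t + (- D) * t^-1) * (2 * i)^-1)); last first.
    by move=> t; rewrite /pt /= mulNr.
  apply: R1_add; first exact: R1_const.
  apply: R1_mul; last exact: R1_const.
  apply: R1_add; first exact: R1_id.
  by apply: R1_mul; [exact: R1_const | exact: R1_inv].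
have := @PCL K _ R1f R1_ext R1_const R1_add R1_mul f _ _ Rpt1 Rpt2.
move=> [Phi [k HPhi]].
have [t00 Hpt0] := Htf p0 c0.
have Phi0 : Phi != 0.
  apply/eqP => H; move: (HPhi _ t00); rewrite H horner0 -pairE Hpt0 => /eqP.
  rewrite mulf_eq0 expf_eq0 (negbTE t00) andbF /= => /eqP; exact: nc0.
have [rs Hrs] := roots_list Phi0.
exists (map pt rs) => y Hy Hn.
have [ty Hpty] := Htf y Hn.
rewrite -Hpty; apply: map_f; apply: Hrs.
by rewrite -HPhi // -pairE Hpty Hy mulr0.
Qed.


Lemma FIBER (Ec : seq (K * K)) :
  (forall y, curve f y -> nn y = d ^+ 2 -> y \in Ec) ->
  forall pt : K * K, exists E : seq (K * K), forall y s, curve f y -> nn y != 0 ->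
    s ^+ 2 = nn y -> xs y s = pt -> y \in E.
Proof.
move=> HEc pt.
case: (eqVneq pt (a, b)) => [->|ptA].
  exists Ec => y s Hy y0 Hs Hx; apply: HEc => //.
  have sn0 := sq_neq0 y0 Hs.
  set u := 1 + d / s.
  have H1 : (y.1 - a) * u = 0.
    by rewrite -(subrr a) -{2}[a](congr1 fst Hx) /u /xs /=; ring.
  have H2 : (y.2 - b) * u = 0.
    by rewrite -(subrr b) -{2}[b](congr1 snd Hx) /u /xs /=; ring.
  case: (eqVneq u 0) => u0.
    have dsn : d / s = -1 by apply: subr0_eq'; rewrite opprK addrC.
    have ds : d = - s by rewrite -(divfK sn0 d) dsn mulN1r.
    by rewrite -Hs ds sqrrN.
  move/eqP: H1; rewrite mulf_eq0 (negbTE u0) orbF subr_eq0 => /eqP E1.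
  move/eqP: H2; rewrite mulf_eq0 (negbTE u0) orbF subr_eq0 => /eqP E2.
  by move: y0; rewrite /nn E1 E2 !subrr expr0n addr0 eqxx.
have [sig Hsig] := sqrt_ex (nn pt).
pose yA (tau : K) := (a + (pt.1 - a) * ((tau - d) / tau), b + (pt.2 - b) * ((tau - d) / tau)).
exists [:: yA sig; yA (- sig)] => y s Hy y0 Hs Hx.
have sn0 := sq_neq0 y0 Hs.
set u := 1 + d / s.
have H1 : pt.1 - a = (y.1 - a) * u by rewrite -Hx /u /xs /=; ring.
have H2 : pt.2 - b = (y.2 - b) * u by rewrite -Hx /u /xs /=; ring.
have u0 : u != 0.
  apply: contraNneq ptA => u0.
  have e1 : pt.1 = a by apply: subr0_eq'; rewrite H1 u0 mulr0.
  have e2 : pt.2 = b by apply: subr0_eq'; rewrite H2 u0 mulr0.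
  by rewrite (pairE pt) e1 e2.
have Htau : s + d = s * u by rewrite /u; field.
have tau0 : s + d != 0 by rewrite Htau mulf_neq0.
have Hy' : y = yA (s + d).
  rewrite /yA addrK H1 H2 Htau {1}(pairE y); congr (_, _); field; by rewrite u0 sn0.
have Hsq : (s + d) ^+ 2 = sig ^+ 2.
  by rewrite Hsig Htau exprMn Hs /nn H1 H2; ring.
move/eqP: Hsq; rewrite eqf_sqr => /orP [/eqP E|/eqP E]; rewrite Hy' E.
  by rewrite mem_head.
by rewrite in_cons mem_head orbT.
Qed.


Definition Tc := pi1_pi2inv f a b d (fun _ => True).

Lemma fib_list (L : seq (K * K)) : exists L' : seq (K * K),
  forall y s, y \in L -> s ^+ 2 = nn y -> xs y s \in L'.
Proof.
elim: L => [|y0 L [L' HL']]; first by exists [::].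
have [sig Hsig] := sqrt_ex (nn y0).
exists [:: xs y0 sig, xs y0 (- sig) & L'] => y s; rewrite in_cons => /orP [/eqP ->|yL] Hs.
  move: Hs; rewrite -Hsig => /eqP; rewrite eqf_sqr => /orP [/eqP ->|/eqP ->].
    by rewrite mem_head.
  by rewrite in_cons mem_head orbT.
by rewrite !in_cons HL' ?orbT.
Qed.

Lemma FINAL (O : K * K -> Prop) :
  (forall L : seq (K * K), exists x, O x /\ Tc x /\ x \notin L) ->
  nonempty_dense_subset (pi2_pi1inv f a b d O) (curve f).
Proof.
move=> Hinf.
split.
  have [x [Ox [[y [w [Hc _]]] _]]] := Hinf [::].
  by exists y, x, w.
split; first by move=> y [x [w [[Hf _] _]]].
move=> y0 Hy0 Z' [F' HF'] HS; apply/HF' => g Fg.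
apply: NNPP => Hg.
have [L HL] := F1 f_irr Hy0 (introN eqP Hg).
have [L' HL'] := fib_list L.
have [x [Ox [[y [w [Hc _]]] xL]]] := Hinf L'.
have [Hy [yn [s [Hs Ex]]]] := (CB x y).1 (ex_intro _ w Hc).
have Sy : pi2_pi1inv f a b d O y by exists x, w.
have gy : ev2 g y = 0 by move/HF': (HS y Sy); apply.
by move: xL; rewrite Ex (HL' y s (HL y Hy gy) Hs).
Qed.

Definition lin (pt r : K * K) : {poly {poly K}} :=
  if r == pt then 1 else if r.1 != pt.1 then ('X - r.1%:P)%:P else 'X - r.2%:P%:P.
Definition lpoly (pt : K * K) (L : seq (K * K)) := foldr (fun r acc => lin pt r * acc) 1 L.

Lemma lpoly_pt pt L : ev2 (lpoly pt L) pt != 0.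
Proof.
elim: L => [|r L IH] /=; first by rewrite ev2_1 oner_eq0.
rewrite ev2M mulf_neq0 // /lin.
case: (eqVneq r pt) => [_|rp]; first by rewrite ev2_1 oner_eq0.
case: (eqVneq r.1 pt.1) => [e1|e1] /=.
  rewrite ev2B ev2X ev2CC subr_eq0.
  by apply: contra rp => /eqP e2; apply/eqP; rewrite (pairE r) (pairE pt) e1 e2.
by rewrite ev2C hornerXsubC subr_eq0 eq_sym.
Qed.

Lemma lpoly_L pt L x : x \in L -> x != pt -> ev2 (lpoly pt L) x = 0.
Proof.
elim: L => [|r L IH] //=; rewrite in_cons => /orP [/eqP ->|xL] xp; rewrite ev2M.
  rewrite /lin (negbTE xp); case: (eqVneq r.1 pt.1) => e1.
    by rewrite /= ev2B ev2X ev2CC subrr mul0r.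
  by rewrite /= ev2C hornerXsubC subrr mul0r.
by rewrite IH // mulr0.
Qed.

Lemma W_sub (Z : K * K -> Prop) : zariski_closed Z -> (forall x, Tc x -> Z x) ->
  forall x, conchoid f a b d x -> Z x.
Proof. by move=> HZ HT x Wx; apply: Wx. Qed.

Lemma notW x : ~ conchoid f a b d x ->
  exists h, ev2 h x != 0 /\ forall y, Tc y -> ev2 h y = 0.
Proof.
move=> Hx.
have [Z [HZ [HTZ nZ]]] : exists Z, zariski_closed Z /\ (forall y, Tc y -> Z y) /\ ~ Z x.
  apply: NNPP => H; apply: Hx => Z HZ HTZ; apply: NNPP => nZ; apply: H.
  by exists Z.
have [h [hx Hh]] := closed_notin HZ nZ.
by exists h; split=> // y /HTZ /Hh.
Qed.


Lemma SPLITQ q (qs : seq {poly {poly K}}) : (forall r, r \in qs -> irreducible_elt r) ->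
  exists e (Lq : seq (K * K)),
    (forall r, r \in qs -> forall x, ev2 r x = 0 -> ev2 q x = 0 \/ ev2 e x = 0) /\
    (forall x, ev2 q x = 0 -> ev2 e x = 0 -> x \in Lq).
Proof.
elim: qs => [|r qs IH] Hirr.
  by exists 1, [::]; split=> // x _; rewrite ev2_1 => /eqP; rewrite oner_eq0.
have [e [Lq [H1 H2]]] := IH (fun r' Hr' => Hirr r' (ltac:(by rewrite in_cons Hr' orbT))).
have rirr := Hirr r (mem_head _ _).
case: (classic (exists x, ev2 r x = 0 /\ ev2 q x != 0)) => [[x0 [rx0 qx0]]|Hn].
  have [Lr HLr] := F1 rirr rx0 qx0.
  exists (r * e), (Lr ++ Lq); split.
    move=> r'; rewrite in_cons => /orP [/eqP -> x rx|r'in x r'x].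
      by right; rewrite ev2M rx mul0r.
    case: (H1 r' r'in x r'x) => [|ex]; first by left.
    by right; rewrite ev2M ex mulr0.
  move=> x qx; rewrite ev2M => /eqP; rewrite mulf_eq0 mem_cat => /orP [/eqP rx|/eqP ex].
    by rewrite (HLr x rx qx).
  by rewrite (H2 x qx ex) orbT.
exists e, Lq; split=> //.
move=> r'; rewrite in_cons => /orP [/eqP -> x rx|r'in x r'x]; last exact: (H1 r' r'in x r'x).
left; apply: NNPP => qx; apply: Hn; exists x; split=> //; exact/eqP.
Qed.

Lemma SPLITP (pt : K * K) (qs : seq {poly {poly K}}) :
  (forall r, r \in qs -> irreducible_elt r) ->
  (forall r, r \in qs -> ev2 r pt = 0 -> exists x, ev2 r x = 0 /\ ~ conchoid f a b d x) ->
  exists e, ev2 e pt != 0 /\ forall r, r \in qs -> forall x, ev2 r x = 0 ->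
     conchoid f a b d x -> x != pt -> ev2 e x = 0.
Proof.
elim: qs => [|r qs IH] Hirr Hnr.
  by exists 1; split; [rewrite ev2_1 oner_eq0|].
have [e [ept He]] := IH (fun r' Hr' => Hirr r' (ltac:(by rewrite in_cons Hr' orbT)))
   (fun r' Hr' => Hnr r' (ltac:(by rewrite in_cons Hr' orbT))).
have rirr := Hirr r (mem_head _ _).
case: (eqVneq (ev2 r pt) 0) => rpt.
  have [x0 [rx0 nW]] := Hnr r (mem_head _ _) rpt.
  have [g [gx0 Hg]] := notW nW.
  have [Lr HLr] := F1 rirr rx0 gx0.
  exists (lpoly pt Lr * e); split; first by rewrite ev2M mulf_neq0 // lpoly_pt.
  move=> r'; rewrite in_cons => /orP [/eqP -> x rx Wx xp|r'in x r'x Wx xp].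
    rewrite ev2M lpoly_L ?mul0r //; apply: HLr => //.
    by apply: (W_sub (closed_V g)) => // y /Hg.
  by rewrite ev2M (He r' r'in x r'x Wx xp) mulr0.
exists (r * e); split; first by rewrite ev2M mulf_neq0.
move=> r'; rewrite in_cons => /orP [/eqP -> x rx Wx xp|r'in x r'x Wx xp].
  by rewrite ev2M rx mul0r.
by rewrite ev2M (He r' r'in x r'x Wx xp) mulr0.
Qed.


Lemma plane_not_W (G : K * K -> Prop) :
  irreducible_component (conchoid f a b d) G ->
  (forall x, conchoid f a b d x) -> forall x, G x.
Proof.
move=> [HG [HGW Hmax]] Hall x.
exact: (Hmax (fun _ => True) (zirr_plane K) (fun _ _ => I) (fun y _ => Hall y) x I).
Qed.

Lemma part2 : (exists p, ~ (curve f p <-> circle a b d p)) ->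
   forall G O : K * K -> Prop, irreducible_component (conchoid f a b d) G ->
     open_in G O -> (exists p, O p) ->
     nonempty_dense_subset (pi2_pi1inv f a b d O) (curve f).
Proof.
move=> Hnc G O Hcomp [Z [HZ HO]] [p Op].
have [Ec HEc] := CIRC Hnc.
have [HGirr [HGW Hmax]] := Hcomp.
apply: FINAL; apply: NNPP => Hinf.
have [L HL] : exists L : seq (K * K), forall x, O x -> Tc x -> x \in L.
  apply: NNPP => H; apply: Hinf => L; apply: NNPP => H'; apply: H; exists L => x Ox Tx.
  by apply: NNPP => xL; apply: H'; exists x; split=> //; split=> //; apply/negP.
have TW : forall x, Tc x -> conchoid f a b d x by move=> x Tx Z' _ HT; apply: HT.
have [Gp nZp] := (HO p).1 Op.
case: (IRRCL HGirr) => [Hall|[[q [qirr HGq]]|[pt Hpt]]].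
- have [g0 [g0p HZg0]] := closed_notin HZ nZp.
  have Hsub : forall x, conchoid f a b d x -> ev2 g0 x = 0 \/ x \in L.
    apply: W_sub; first exact: closed_U (closed_V g0) (closed_list L).
    move=> x Tx; case: (classic (Z x)) => Zx; first by left; apply: HZg0.
    by right; apply: HL => //; apply/HO; split.
  have [x [gx xL]] := NZ L (ev2_neq0_poly g0p).
  case: (Hsub x (HGW x (Hall x))) => H; first by move: gx; rewrite H eqxx.
  by move: xL; rewrite H.
- have [g0 [g0p HZg0]] := closed_notin HZ nZp.
  have [L0 HL0] := F1 qirr ((HGq p).1 Gp) g0p.
  have [x1 nW1] : exists x, ~ conchoid f a b d x.
    apply: NNPP => H.
    have Hall : forall x, G x.
      by apply: (plane_not_W Hcomp) => x; apply: NNPP => Hn; apply: H; exists x.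
    have q0 : q != 0 by case: qirr.
    have [x [qx _]] := NZ [::] q0.
    by move: qx; rewrite (HGq x).1 ?eqxx.
  have [h [hx1 Hh]] := notW nW1.
  have [qs [Hqs Hhq]] := FACT (ev2_neq0_poly hx1).
  have [e [Lq [He1 He2]]] := SPLITQ q Hqs.
  have Hsub : forall x, conchoid f a b d x -> ev2 e x = 0 \/ x \in L ++ L0.
    apply: W_sub; first exact: closed_U (closed_V e) (closed_list (L ++ L0)).
    move=> x Tx; have [r [rin rx]] := Hhq x (Hh x Tx).
    case: (He1 r rin x rx) => [qx|ex]; last by left.
    right; rewrite mem_cat; case: (classic (Z x)) => Zx.
      by rewrite (HL0 x qx (HZg0 x Zx)) orbT.
    by rewrite HL //; apply/HO; split=> //; apply/HGq.
  have [x [qx xn]] := F2 (Lq ++ L ++ L0) qirr.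
  move: xn; rewrite mem_cat.
  case: (Hsub x (HGW x ((HGq x).2 qx))) => [ex|->]; last by rewrite orbT.
  by rewrite (He2 x qx ex).
-
  have [x1 nW1] : exists x, ~ conchoid f a b d x.
    apply: NNPP => H.
    have Hall : forall x, G x.
      by apply: (plane_not_W Hcomp) => x; apply: NNPP => Hn; apply: H; exists x.
    have := (Hpt (pt.1 + 1, pt.2)).1 (Hall _).
    move/(congr1 fst) => /= /eqP; rewrite -subr_eq0 addrAC subrr add0r.
    by rewrite oner_eq0.
  have [h [hx1 Hh]] := notW nW1.
  have [qs [Hqs Hhq]] := FACT (ev2_neq0_poly hx1).
  have [e [ept He]] : exists e, ev2 e pt != 0 /\ forall r, r \in qs -> forall x, ev2 r x = 0 ->
     conchoid f a b d x -> x != pt -> ev2 e x = 0.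
    apply: SPLITP => // r rin rpt.
    apply: NNPP => H.
    have HrW : forall x, ev2 r x = 0 -> conchoid f a b d x.
      move=> x rx; apply: NNPP => nW; apply: H; by exists x.
    have Hrsub := Hmax (V r) (zirr_V (Hqs r rin)) (fun x Gx => ltac:(rewrite /V ((Hpt x).1 Gx); exact: rpt)) HrW.
    have [x [rx xn]] := F2 [:: pt] (Hqs r rin).
    by move: xn; rewrite ((Hpt x).1 (Hrsub x rx)) mem_head.
  have HTe : forall x, Tc x -> x != pt -> ev2 e x = 0.
    move=> x Tx xp; have [r [rin rx]] := Hhq x (Hh x Tx).
    exact: (He r rin x rx (TW x Tx) xp).
  have Tpt : Tc pt.
    apply: NNPP => nT.
    have : ev2 e pt = 0.
      apply: (W_sub (closed_V e)); last by apply: HGW; apply/Hpt.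
      move=> x Tx; apply: HTe => //; apply/eqP => xp; apply: nT; by rewrite -xp.
    by move/eqP; rewrite (negbTE ept).
  have [y0 [w0 [Hc0 _]]] := Tpt.
  have [Hy0 [y00 [s0 [Hs0 Ept]]]] := (CB pt y0).1 (ex_intro _ w0 Hc0).
  have [E HE] := FIBER HEc pt.
  have := KEY (psi := fun t => ev2 e (xs t.1 t.2)) (E := E) (R2_ev e) _ Hy0 y00 Hs0.
  rewrite /= -Ept => H; move: ept; rewrite H ?eqxx //.
  move=> y s Hy yn Hs yE; apply: HTe.
    by exists y; have [w Hw] := (CB (xs y s) y).2 (conj Hy (conj yn (ex_intro _ s (conj Hs erefl)))); exists w.
  apply/eqP => Hx; move: yE; rewrite (HE y s Hy yn Hs Hx).
  done.
Qed.

End Conch.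

Theorem lemma3 (K : closedFieldType) (charK0 : [pchar K] =i pred0)
  (f : {poly {poly K}}) (f_irr : irreducible_elt f) (a b d : K) (d_neq0 : d != 0)
  (C0_ne : exists p : K * K, curve f p /\ (p.1 - a) ^+ 2 + (p.2 - b) ^+ 2 != 0) :
  (forall O : K * K -> Prop, open_in (curve f) O -> (exists p, O p) ->
     nonempty_dense_subset (pi1_pi2inv f a b d O) (conchoid f a b d)) /\
  ((exists p, ~ (curve f p <-> circle a b d p)) ->
   forall G O : K * K -> Prop, irreducible_component (conchoid f a b d) G ->
     open_in G O -> (exists p, O p) ->
     nonempty_dense_subset (pi2_pi1inv f a b d O) (curve f)).
Proof.
by split; [apply: part1 | apply: part2].
Qed.
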